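(* Assume that $N$ is a semi-free DG $B$-module. Let $N'$ be a second semi-free DG $B$-module built in the same way from modules $M_i'$ and maps $\xi_i'$, $\tau_i'$, $\delta_i'$, and $\alpha_i'$. Fix an integer $p$. A sequence of $R$-module homomorphisms $\{S_i\colon N_i\to N'_{i+p}\}$ is a DG $B$-module homomorphism $N\to N'$ of degree $p$ if and only if it is a degree-$p$ homomorphism $N\to N'$ of the underlying $R$-complexes such that for all integers $i$ we have $S_i=\begin{bmatrix}(-1)^pz_{i-1} & v_i \\ 0 & z_i\end{bmatrix}$ for some $z_i\colon M_i\to M'_{i+p}$ and $v_i\colon M_i\to M'_{i+p-1}$ and $v_{i+j}(\gamma_{i,s}m_j)=(-1)^{i(p+1)}\gamma_{i,s}v_j(m_j)$ and $z_{i+j}(\gamma_{i,s}m_j)=(-1)^{ip}\gamma_{i,s}z_j(m_j)$ for $s=1,\ldots,r_i$ and for all $m_j\in M_j$ for each integer $j$.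
   Context: Let $R$ be a commutative noetherian ring. Let $A$ be a (commutative, positively graded) DG $R$-algebra such that each $A_i$ is free over $R$ of finite rank, with fixed basis $\{\gamma_{i,1},\ldots,\gamma_{i,r_i}\}$ of $A_i$. Let $t\in R$ and $B=K^R(t)\otimes_R A$, where $K^R(t)$ is the Koszul complex on $t$; identify $B_i$ with $A_{i-1}\oplus A_i$ (column vectors). For cardinals $\beta_i$ ($\beta_i=0$ for $i\ll0$) set $M_i=\bigoplus_{j\ge0}A_j^{(\beta_{i-j})}$. Given $R$-linear maps $\xi_i\colon M_i\to M_{i-1}$, $\tau_i\colon M_i\to M_i$, $\delta_i\colon M_i\to M_{i-2}$, $\alpha_i\colon M_i\to M_{i-1}$, $N$ is the sequence with $N_i=M_{i-1}\oplus M_i$ and $\partial^N_i=\left[\begin{smallmatrix}\xi_{i-1}&\delta_i\\ \tau_{i-1}&\alpha_i\end{smallmatrix}\right]$, with $B$ acting by $\left[\begin{smallmatrix}a_{i-1}\\ a_i\end{smallmatrix}\right]\left[\begin{smallmatrix}m_{j-1}\\ m_j\end{smallmatrix}\right]=\left[\begin{smallmatrix}a_{i-1}m_j+(-1)^ia_im_{j-1}\\ a_im_j\end{smallmatrix}\right]$. A DG $B$-module homomorphism of degree $p$ is an $R$-complex homomorphism $f$ of degree $p$ with $f(bn)=(-1)^{p|b|}bf(n)$. *)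

(* Defs.v *)
From HB Require Import structures.
From mathcomp Require Import all_boot all_order all_algebra.
From Stdlib Require List.
Unset Strict Implicit. Unset Printing Implicit Defensive.
Import Order.TTheory GRing.Theory Num.Theory.
Local Open Scope ring_scope.

Definition sgn {R : pzRingType} (z : int) : R := (-1) ^+ (absz z).

Definition is_ideal {R : comPzRingType} (I : R -> Prop) : Prop :=
  I 0 /\ (forall x y, I x -> I y -> I (x + y)) /\ (forall c x, I x -> I (c * x)).

Definition noetherian (R : comPzRingType) : Prop :=
  forall I : R -> Prop, is_ideal I ->
    exists s : seq R, forall x, I x <->
      exists c : 'I_(size s) -> R, x = \sum_(k < size s) c k * s`_k.

(* The DG R-algebra A, given as the total algebra (direct sum of its  *)
(* homogeneous components A_i = [pred a | Ah i a]) with differential *)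
(* dA.                                                                 *)
Section DGAlg.
Context {R : comPzRingType} {A : algType R}.
Variables (Ah : int -> A -> Prop) (dA : A -> A).

Definition DG_comm_alg : Prop :=
  (forall i, Ah i 0) /\
  (forall i a b, Ah i a -> Ah i b -> Ah i (a + b)) /\
  (forall i c a, Ah i a -> Ah i (c *: a)) /\
  (forall a, exists (s : seq int) (f : int -> A),
      (forall i, Ah i (f i)) /\ a = \sum_(i <- s) f i) /\
  (forall (s : seq int) (f : int -> A), uniq s -> (forall i, Ah i (f i)) ->
      \sum_(i <- s) f i = 0 -> forall i, i \in s -> f i = 0) /\
  (forall i a, i < 0 -> Ah i a -> a = 0) /\
  Ah 0 1 /\
  (forall i j a b, Ah i a -> Ah j b -> Ah (i + j) (a * b)) /\
  (forall i j a b, Ah i a -> Ah j b -> a * b = sgn (i * j) *: (b * a)) /\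
  (forall i a, odd (absz i) -> Ah i a -> a * a = 0) /\
  (forall a b, dA (a + b) = dA a + dA b) /\
  (forall c a, dA (c *: a) = c *: dA a) /\
  (forall i a, Ah i a -> Ah (i - 1) (dA a)) /\
  (forall a, dA (dA a) = 0) /\
  (forall i a b, Ah i a -> dA (a * b) = dA a * b + sgn i *: (a * dA b)).

Definition fixed_basis (r : nat -> nat) (gamma : forall i : nat, 'I_(r i) -> A) : Prop :=
  forall i : nat,
    (forall s, Ah i (gamma i s)) /\
    (forall a, Ah i a -> exists c : 'I_(r i) -> R, a = \sum_s c s *: gamma i s) /\
    (forall c : 'I_(r i) -> R, \sum_s c s *: gamma i s = 0 -> forall s, c s = 0).

End DGAlg.

(* The graded A-modules M_i = \bigoplus_{j>=0} A_j^{(beta_{i-j})}.    *)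
(* An element of the direct sum over all i is a family m k b in A     *)
(* indexed by k : int and b : beta k (the b-th copy of A in the        *)
(* summands A_{i-k}^{(beta_k)}); it lies in M_i iff each m k b lies in *)
(* A_{i-k} and the family has finite support.                          *)
Definition Mt (A : Type) (beta : int -> Type) : Type := forall k : int, beta k -> A.
Definition Nt (A : Type) (beta : int -> Type) : Type := (Mt A beta * Mt A beta)%type.

Definition bounded_below (beta : int -> Type) : Prop :=
  exists k0 : int, forall k, k < k0 -> beta k -> False.

Section Mod.
Context {R : comPzRingType} {A : algType R}.


Context {beta : int -> Type}.

Definition zeroM : Mt A beta := fun k b => 0.
Definition addM (m1 m2 : Mt A beta) : Mt A beta := fun k b => m1 k b + m2 k b.
Definition scaleM (c : R) (m : Mt A beta) : Mt A beta := fun k b => c *: m k b.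
Definition actM (a : A) (m : Mt A beta) : Mt A beta := fun k b => a * m k b.

Definition finsupp (m : Mt A beta) : Prop :=
  (exists s : seq int, forall k, k \notin s -> forall b, m k b = 0) /\
  (forall k, exists l : list (beta k), forall b, m k b <> 0 -> List.In b l).

Definition Mdeg (Ah : int -> A -> Prop) (i : int) (m : Mt A beta) : Prop :=
  (forall k b, Ah (i - k) (m k b)) /\ finsupp m.

(* The graded module N: N_i = M_{i-1} (+) M_i, column vectors (x, y). *)
Definition zeroN : Nt A beta := (zeroM, zeroM).
Definition addN (n1 n2 : Nt A beta) : Nt A beta := (addM n1.1 n2.1, addM n1.2 n2.2).
Definition scaleN (c : R) (n : Nt A beta) : Nt A beta := (scaleM c n.1, scaleM c n.2).
Definition Ndeg (Ah : int -> A -> Prop) (i : int) (n : Nt A beta) : Prop :=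
  Mdeg Ah (i - 1) n.1 /\ Mdeg Ah i n.2.

(* Action of b = [a'; a] \in B_i = A_{i-1} (+) A_i on n = [x; y]:
   b n = [a' y + (-1)^i a x ; a y]. *)
Definition actB (i : int) (a' a : A) (n : Nt A beta) : Nt A beta :=
  (addM (actM a' n.2) (scaleM (sgn i) (actM a n.1)), actM a n.2).

Definition dN (xi tau delta alpha : int -> Mt A beta -> Mt A beta) (i : int) (n : Nt A beta) : Nt A beta :=
  (addM (xi (i - 1) n.1) (delta i n.2), addM (tau (i - 1) n.1) (alpha i n.2)).

End Mod.

(* R-linear maps M_i -> M'_j (given as functions on the total carriers) *)
Definition Mhom {R : comPzRingType} {A : algType R} (Ah : int -> A -> Prop)
  {beta beta' : int -> Type} (i j : int) (f : Mt A beta -> Mt A beta') : Prop :=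
  (forall m, Mdeg Ah i m -> Mdeg Ah j (f m)) /\
  (forall m1 m2, Mdeg Ah i m1 -> Mdeg Ah i m2 -> f (addM m1 m2) = addM (f m1) (f m2)) /\
  (forall c m, Mdeg Ah i m -> f (scaleM c m) = scaleM c (f m)).

Definition Nhom {R : comPzRingType} {A : algType R} (Ah : int -> A -> Prop)
  {beta beta' : int -> Type} (i j : int) (f : Nt A beta -> Nt A beta') : Prop :=
  (forall n, Ndeg Ah i n -> Ndeg Ah j (f n)) /\
  (forall n1 n2, Ndeg Ah i n1 -> Ndeg Ah i n2 -> f (addN n1 n2) = addN (f n1) (f n2)) /\
  (forall c n, Ndeg Ah i n -> f (scaleN c n) = scaleN c (f n)).

Section DGB.
Context {R : comPzRingType} {A : algType R}.
Variables (Ah : int -> A -> Prop) (dA : A -> A) (t : R).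

Definition structure_maps {beta : int -> Type} (xi tau delta alpha : int -> Mt A beta -> Mt A beta) :=
  forall i, Mhom Ah i (i - 1) (xi i) /\ Mhom Ah i i (tau i) /\
            Mhom Ah i (i - 2) (delta i) /\ Mhom Ah i (i - 1) (alpha i).

(* B = K^R(t) (x) A, B_i = A_{i-1} (+) A_i; its differential is
   d[a'; a] = [- dA a'; t a' + dA a]. *)
Definition DGBmodule {beta : int -> Type} (xi tau delta alpha : int -> Mt A beta -> Mt A beta) :=
  (forall i n, Ndeg Ah i n -> dN xi tau delta alpha (i - 1) (dN xi tau delta alpha i n) = zeroN) /\
  (forall i j a' a n, Ah (i - 1) a' -> Ah i a -> Ndeg Ah j n ->
     dN xi tau delta alpha (i + j) (actB i a' a n) =
     addN (actB (i - 1) (- dA a') (t *: a' + dA a) n)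
          (scaleN (sgn i) (actB i a' a (dN xi tau delta alpha j n)))).

Definition complex_hom {beta beta' : int -> Type}
  (xi tau delta alpha : int -> Mt A beta -> Mt A beta)
  (xi' tau' delta' alpha' : int -> Mt A beta' -> Mt A beta')
  (p : int) (S : int -> Nt A beta -> Nt A beta') : Prop :=
  (forall i, Nhom Ah i (i + p) (S i)) /\
  (forall i n, Ndeg Ah i n ->
     dN xi' tau' delta' alpha' (i + p) (S i n) =
     scaleN (sgn p) (S (i - 1) (dN xi tau delta alpha i n))).

Definition DGB_hom {beta beta' : int -> Type}
  (xi tau delta alpha : int -> Mt A beta -> Mt A beta)
  (xi' tau' delta' alpha' : int -> Mt A beta' -> Mt A beta')
  (p : int) (S : int -> Nt A beta -> Nt A beta') : Prop :=
  complex_hom xi tau delta alpha xi' tau' delta' alpha' p S /\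
  (forall i j a' a n, Ah (i - 1) a' -> Ah i a -> Ndeg Ah j n ->
     S (i + j) (actB i a' a n) = scaleN (sgn (p * i)) (actB i a' a (S j n))).

End DGB.

(* Main.v *)
Require Import Defs.
From HB Require Import structures.
From mathcomp Require Import all_boot all_order all_algebra zify.
Import Order.TTheory GRing.Theory Num.Theory.
Local Open Scope ring_scope.
Lemma sgn_mod (R : comPzRingType) (a : int) : sgn a = (-1) ^+ (absz a %% 2)%N :> R.
Proof. by rewrite /sgn -signr_odd modn2 signr_odd. Qed.
Lemma sgnD (R : comPzRingType) (a b : int) : sgn (a + b) = sgn a * sgn b :> R.
Proof.
rewrite sgn_mod /sgn -exprD.
have -> : ((absz (a + b)%R) %% 2 = (absz a + absz b) %% 2)%N by lia.
by rewrite modn2 signr_odd.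
Qed.
Lemma sgnN (R : comPzRingType) (a : int) : sgn (- a) = sgn a :> R.
Proof. by rewrite /sgn abszN. Qed.
Lemma sgn_sq (R : comPzRingType) (a : int) : sgn a * sgn a = 1 :> R.
Proof. by rewrite -sgnD sgn_mod; have -> : ((absz (a + a)%R) %% 2 = 0)%N by lia. Qed.
Lemma sgnM1 (R : comPzRingType) (i p : int) : sgn (i * (p+1)) = sgn (p * i) * sgn i :> R.
Proof. by rewrite mulrDr mulr1 sgnD [i * p]mulrC. Qed.
Lemma sgnM2 (R : comPzRingType) (i p : int) : sgn (p * (i - 1)) = sgn (p * i) * sgn p :> R.
Proof. by rewrite mulrBr mulr1 sgnD sgnN. Qed.
From Stdlib Require Import FunctionalExtensionality.

Lemma Mext (R : comPzRingType) (A : algType R) (beta : int -> Type) (m1 m2 : Mt A beta) :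
  (forall k b, m1 k b = m2 k b) -> m1 = m2.
Proof.
move=> H; apply: functional_extensionality_dep => k.
by apply: functional_extensionality_dep => b.
Qed.

Section Aux.
Variables (R : comPzRingType) (A : algType R) (Ah : int -> A -> Prop).
Hypothesis Ah0 : forall i, Ah i 0.
Hypothesis AhD : forall i a b, Ah i a -> Ah i b -> Ah i (a + b).
Hypothesis AhZ : forall i c a, Ah i a -> Ah i (c *: a).
Hypothesis AhM : forall i j a b, Ah i a -> Ah j b -> Ah (i + j) (a * b).

Lemma Mdeg_zero (beta : int -> Type) i : Mdeg Ah i (@zeroM R A beta).
Proof.
split=> //; split; first by exists [::].
by move=> k; exists nil => b; rewrite /zeroM.
Qed.

Lemma Mdeg_add (beta : int -> Type) i (m1 m2 : Mt A beta) :
  Mdeg Ah i m1 -> Mdeg Ah i m2 -> Mdeg Ah i (addM m1 m2).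
Proof.
move=> [H1 [[s1 S1] L1]] [H2 [[s2 S2] L2]]; split; first by move=> k b; apply: AhD.
split.
  exists (s1 ++ s2) => k; rewrite mem_cat negb_or => /andP[k1 k2] b.
  by rewrite /addM S1 // S2 // addr0.
move=> k; case: (L1 k) => l1 P1; case: (L2 k) => l2 P2; exists (l1 ++ l2) => b Hb.
apply: List.in_or_app.
case E1: (m1 k b == 0).
  right; apply: P2 => E2; apply: Hb; by rewrite /addM (eqP E1) E2 addr0.
by left; apply: P1 => E; rewrite E eqxx in E1.
Qed.

Lemma Mdeg_scale (beta : int -> Type) i c (m : Mt A beta) :
  Mdeg Ah i m -> Mdeg Ah i (scaleM c m).
Proof.
move=> [H1 [[s1 S1] L1]]; split; first by move=> k b; apply: AhZ.
split.
  by exists s1 => k k1 b; rewrite /scaleM S1 // scaler0.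
move=> k; case: (L1 k) => l1 P1; exists l1 => b Hb; apply: P1 => E; apply: Hb.
by rewrite /scaleM E scaler0.
Qed.

Lemma Mdeg_act (beta : int -> Type) i j a (m : Mt A beta) :
  Ah i a -> Mdeg Ah j m -> Mdeg Ah (i + j) (actM a m).
Proof.
move=> Ha [H1 [[s1 S1] L1]]; split.
  move=> k b; rewrite -addrA; exact: AhM.
split.
  by exists s1 => k k1 b; rewrite /actM S1 // mulr0.
move=> k; case: (L1 k) => l1 P1; exists l1 => b Hb; apply: P1 => E; apply: Hb.
by rewrite /actM E mulr0.
Qed.
End Aux.

Lemma Ah_sum (R : comPzRingType) (A : algType R) (Ah : int -> A -> Prop)
  (Ah0 : forall i, Ah i 0) (AhD : forall i a b, Ah i a -> Ah i b -> Ah i (a + b))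
  (AhZ : forall i c a, Ah i a -> Ah i (c *: a)) (I : Type) (l : seq I) (n : int)
  (gam : I -> A) (c : I -> R) :
  (forall s, Ah n (gam s)) -> Ah n (\sum_(s <- l) c s *: gam s).
Proof. move=> H; apply: big_ind => [|x y|s _]; [exact: Ah0|exact: AhD|exact: AhZ]. Qed.

Lemma ext_lin (R : comPzRingType) (A : algType R) (Ah : int -> A -> Prop)
  (Ah0 : forall i, Ah i 0) (AhD : forall i a b, Ah i a -> Ah i b -> Ah i (a + b))
  (AhZ : forall i c a, Ah i a -> Ah i (c *: a))
  (AhM : forall i j a b, Ah i a -> Ah j b -> Ah (i + j) (a * b))
  (beta beta' : int -> Type) (F : Mt A beta -> Mt A beta') (G : Mt A beta') (e : R)
  (n j d : int) (m : Mt A beta) (I : Type) (l : seq I) (gam : I -> A) (c : I -> R) :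
  (forall s, Ah n (gam s)) -> Mhom Ah (n + j) d F -> Mdeg Ah j m ->
  (forall s, F (actM (gam s) m) = scaleM e (actM (gam s) G)) ->
  F (actM (\sum_(s <- l) c s *: gam s) m) = scaleM e (actM (\sum_(s <- l) c s *: gam s) G).
Proof.
move=> Hg [Fd [FD FZ]] Hm HF.
elim: l => [|x l IH].
  rewrite !big_nil.
  have D0 : Mdeg Ah (n + j) (actM (0 : A) m) by apply: Mdeg_act.
  have -> : actM (0 : A) m = scaleM 0 (actM (0 : A) m).
    by apply: Mext => k b; rewrite /scaleM /actM /= scale0r mul0r.
  rewrite FZ //; apply: Mext => k b; by rewrite /scaleM /actM /= scale0r mul0r scaler0.
rewrite !big_cons.
have Dx : Mdeg Ah (n + j) (actM (gam x) m) by apply: Mdeg_act.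
have Dl : Mdeg Ah (n + j) (actM (\sum_(s <- l) c s *: gam s) m).
  by apply: Mdeg_act => //; apply: Ah_sum.
have -> : actM (c x *: gam x + \sum_(s <- l) c s *: gam s) m =
  addM (scaleM (c x) (actM (gam x) m)) (actM (\sum_(s <- l) c s *: gam s) m).
  by apply: Mext => k b; rewrite /addM /scaleM /actM mulrDl scalerAl.
rewrite FD //; last by apply: Mdeg_scale.
rewrite FZ // HF IH; apply: Mext => k b.
by rewrite /addM /scaleM /actM mulrDl scalerDr -scalerAl !scalerA mulrC.
Qed.

Lemma ext_deg (R : comPzRingType) (A : algType R) (Ah : int -> A -> Prop)
  (Ah0 : forall i, Ah i 0) (AhD : forall i a b, Ah i a -> Ah i b -> Ah i (a + b))
  (AhZ : forall i c a, Ah i a -> Ah i (c *: a))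
  (AhM : forall i j a b, Ah i a -> Ah j b -> Ah (i + j) (a * b))
  (Aneg : forall i a, i < 0 -> Ah i a -> a = 0)
  (r : nat -> nat) (gamma : forall i : nat, 'I_(r i) -> A)
  (beta beta' : int -> Type) (F : int -> Mt A beta -> Mt A beta')
  (G : int -> Mt A beta -> Mt A beta') (e : int -> R) (d : int -> int) :
  fixed_basis Ah r gamma ->
  (forall i, Mhom Ah i (d i) (F i)) ->
  (forall (i : nat) (s : 'I_(r i)) (j : int) (m : Mt A beta), Mdeg Ah j m ->
     F (i%:Z + j) (actM (gamma i s) m) = scaleM (e i) (actM (gamma i s) (G j m))) ->
  forall k a j m, Ah k a -> Mdeg Ah j m -> F (k + j) (actM a m) = scaleM (e k) (actM a (G j m)).
Proof.
move=> fb HF HG k a j m Ha Hm.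
case: k Ha => [n|n] Ha.
  have [Hg [Hsp _]] := fb n.
  have [c ->] := Hsp a Ha.
  apply: (@ext_lin R A Ah Ah0 AhD AhZ AhM beta beta' (F (Posz n + j)) (G j m) (e (Posz n)) (Posz n) j (d (Posz n + j)) m _ (index_enum 'I_(r n)) (gamma n) c (fun s => Hg s) (HF _) Hm) => s.
  exact: HG.
have -> : a = 0 by apply: (Aneg (Negz n)).
have := @ext_lin R A Ah Ah0 AhD AhZ AhM beta beta' (F (Negz n + j)) (G j m) (e (Negz n))
  (Negz n) j (d (Negz n + j)) m 'I_0 [::] (fun _ => 0) (fun _ => 0) (fun _ => Ah0 _) (HF _) Hm.
rewrite big_nil; apply=> -[s]; by rewrite ltn0.
Qed.
From mathcomp Require Import ring.

Theorem lemma2p11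
  (R : comPzRingType) (A : algType R) (Ah : int -> A -> Prop) (dA : A -> A)
  (r : nat -> nat) (gamma : forall i : nat, 'I_(r i) -> A) (t : R)
  (beta beta' : int -> Type)
  (xi tau delta alpha : int -> Mt A beta -> Mt A beta)
  (xi' tau' delta' alpha' : int -> Mt A beta' -> Mt A beta')
  (p : int) (S : int -> Nt A beta -> Nt A beta') :
  noetherian R ->
  DG_comm_alg Ah dA ->
  fixed_basis Ah r gamma ->
  bounded_below beta -> bounded_below beta' ->
  structure_maps Ah xi tau delta alpha ->
  structure_maps Ah xi' tau' delta' alpha' ->
  DGBmodule Ah dA t xi tau delta alpha ->
  DGBmodule Ah dA t xi' tau' delta' alpha' ->
  (forall i, Nhom Ah i (i + p) (S i)) ->
  (DGB_hom Ah xi tau delta alpha xi' tau' delta' alpha' p S <->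
   (complex_hom Ah xi tau delta alpha xi' tau' delta' alpha' p S /\
    exists (z v : int -> Mt A beta -> Mt A beta'),
      (forall i, Mhom Ah i (i + p) (z i)) /\
      (forall i, Mhom Ah i (i + p - 1) (v i)) /\
      (forall i n, Ndeg Ah i n ->
         S i n = (addM (scaleM (sgn p) (z (i - 1) n.1)) (v i n.2), z i n.2)) /\
      (forall (i : nat) (s : 'I_(r i)) (j : int) (m : Mt A beta), Mdeg Ah j m ->
         v (i%:Z + j) (actM (gamma i s) m) = scaleM (sgn (i%:Z * (p + 1))) (actM (gamma i s) (v j m))) /\
      (forall (i : nat) (s : 'I_(r i)) (j : int) (m : Mt A beta), Mdeg Ah j m ->
         z (i%:Z + j) (actM (gamma i s) m) = scaleM (sgn (i%:Z * p)) (actM (gamma i s) (z j m))))).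
Proof.
move=> _ [Ah0 [AhD [AhZ [_ [_ [Aneg [Ah01 [AhM _]]]]]]]] fb _ _ _ _ _ _ HN.
have MZ := fun i => @Mdeg_zero R A Ah Ah0 beta i.
split.
- move=> [Hc Hb]; split=> //.
  exists (fun j m => (S j (zeroM, m)).2), (fun j m => (S j (zeroM, m)).1).
  have ND0 : forall i m, Mdeg Ah i m -> Ndeg Ah i (zeroM, m) by move=> i m Hm; split => //; apply: Mdeg_zero.
  split; [|split; [|split; [|split]]].
  + move=> i; have [Sd [SD SZ]] := HN i; split; [|split].
    * by move=> m Hm; have [] := Sd _ (ND0 _ _ _ Hm).
    * move=> m1 m2 H1 H2; have := SD (zeroM, m1) (zeroM, m2) (ND0 _ _ _ H1) (ND0 _ _ _ H2).
      move/(congr1 snd); rewrite /= => <-.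
      by rewrite /addN /= (_ : addM zeroM zeroM = @zeroM R A beta) //; apply: Mext => k b; rewrite /addM /zeroM /= addr0.
    * move=> c m Hm; have := SZ c (zeroM, m) (ND0 _ _ _ Hm); move/(congr1 snd); rewrite /= => <-.
      by rewrite /scaleN /= (_ : scaleM c zeroM = @zeroM R A beta) //; apply: Mext => k b; rewrite /scaleM /zeroM /= scaler0.
  + move=> i; have [Sd [SD SZ]] := HN i; split; [|split].
    * by move=> m Hm; have [] := Sd _ (ND0 _ _ _ Hm).
    * move=> m1 m2 H1 H2; have := SD (zeroM, m1) (zeroM, m2) (ND0 _ _ _ H1) (ND0 _ _ _ H2).
      move/(congr1 fst); rewrite /= => <-.
      by rewrite /addN /= (_ : addM zeroM zeroM = @zeroM R A beta) //; apply: Mext => k b; rewrite /addM /zeroM /= addr0.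
    * move=> c m Hm; have := SZ c (zeroM, m) (ND0 _ _ _ Hm); move/(congr1 fst); rewrite /= => <-.
      by rewrite /scaleN /= (_ : scaleM c zeroM = @zeroM R A beta) //; apply: Mext => k b; rewrite /scaleM /zeroM /= scaler0.
  + move=> i [n1 n2] [Hn1 Hn2] /=.
    have [Sd [SD SZ]] := HN i.
    have E : (n1, n2) = addN (n1, zeroM) (zeroM, n2).
      by rewrite /addN /=; congr pair; apply: Mext => k b; rewrite /addM /zeroM /= ?addr0 ?add0r.
    have E1 : (n1, zeroM) = actB 1 1 0 (zeroM, n1) :> Nt A beta.
      by rewrite /actB /=; congr pair; apply: Mext => k b;
        rewrite /addM /scaleM /actM /zeroM /= ?mul1r ?mul0r ?scaler0 ?addr0.
    have H1 := Hb 1 (i - 1) 1 0 (zeroM, n1).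
    rewrite subrr (_ : 1 + (i - 1) = i) in H1; last by rewrite addrC subrK.
    rewrite E SD; [|by split => //; apply: Mdeg_zero|exact: ND0].
    rewrite E1 H1 //.
    rewrite /addN /scaleN /actB /=; congr pair; apply: Mext => k b;
      rewrite /addM /scaleM /actM /zeroM /= ?mulr1 ?mul1r ?mul0r ?scaler0 ?addr0 ?add0r //.
  + move=> i s j m Hm.
    have Hg : Ah i (gamma i s) by have [] := fb i.
    have E : (zeroM, actM (gamma i s) m) = actB i 0 (gamma i s) (zeroM, m) :> Nt A beta.
      by rewrite /actB /=; congr pair; apply: Mext => k b;
        rewrite /addM /scaleM /actM /zeroM /= ?mul0r ?mulr0 ?scaler0 ?addr0.
    rewrite E Hb //.
    rewrite /scaleN /actB /=; apply: Mext => k b.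
    by rewrite /addM /scaleM /actM /= mul0r add0r scalerA sgnM1.
  + move=> i s j m Hm.
    have Hg : Ah i (gamma i s) by have [] := fb i.
    have E : (zeroM, actM (gamma i s) m) = actB i 0 (gamma i s) (zeroM, m) :> Nt A beta.
      by rewrite /actB /=; congr pair; apply: Mext => k b;
        rewrite /addM /scaleM /actM /zeroM /= ?mul0r ?mulr0 ?scaler0 ?addr0.
    rewrite E Hb //.
    by rewrite /scaleN /actB /= mulrC.
- move=> [Hc [z [v [Hz [Hv [HS [HvG HzG]]]]]]]; split=> //.
  have Zl := @ext_deg R A Ah Ah0 AhD AhZ AhM Aneg r gamma beta beta' z z
    (fun k => sgn (k * p)) (fun i => i + p) fb Hz HzG.
  have Vl := @ext_deg R A Ah Ah0 AhD AhZ AhM Aneg r gamma beta beta' v v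
    (fun k => sgn (k * (p + 1))) (fun i => i + p - 1) fb Hv HvG.
  move=> i j a' a [n1 n2] Ha' Ha [Hn1 Hn2].
  have e1 : i - 1 + j = i + j - 1 by ring.
  have e2 : i + (j - 1) = i + j - 1 by ring.
  have D1 : Mdeg Ah (i + j - 1) (actM a' n2) by rewrite -e1; apply: Mdeg_act.
  have D2 : Mdeg Ah (i + j - 1) (scaleM (sgn i) (actM a n1)).
    by apply: Mdeg_scale => //; rewrite -e2; apply: Mdeg_act.
  have D3 : Mdeg Ah (i + j) (actM a n2) by apply: Mdeg_act.
  have ND : Ndeg Ah (i + j) (actB i a' a (n1, n2)).
    by split => //=; apply: Mdeg_add.
  rewrite HS // HS //=.
  have [_ [zD zZ]] := Hz (i + j - 1).
  rewrite zD // zZ; last by rewrite -e2; apply: Mdeg_act.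
  rewrite -{1}e1 Zl // -{1}e2 Zl // Zl // Vl //.
  rewrite /scaleN /actB /=; congr pair; apply: Mext => k b;
    rewrite /addM /scaleM /actM /=.
  - rewrite [(i - 1) * p]mulrC [i * p]mulrC sgnM2 sgnM1.
    rewrite mulrDr !scalerDr -!scalerAr !scalerA addrA.
    congr (_ *: _ + _ *: _ + _ *: _).
    + by rewrite mulrC -mulrA sgn_sq mulr1.
    + by ring.
  - by rewrite mulrC.
Qed.
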